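(* With $f(n)$ the number of partitions of $n$ having a fixed hook (and $f(0)=0$), $$\sum_{n\ge0} f(n)q^n=\sum_{T=0}^\infty \frac{q^{(T+1)^2}}{(q;q)_T\,(q^{T+2};q)_\infty}=\sum_{T=0}^\infty \frac{q^{(T+1)^2}(1-q^{T+1})}{(q;q)_\infty}$$ as formal power series in $q$.
   Context: A partition $\lambda=(\lambda_1\ge\cdots\ge\lambda_t>0)$ of $n$ has first-column hook lengths $h_{i,1}(\lambda)=\lambda_i+(t-i)$, $1\le i\le t$. $\lambda$ has a fixed hook if $h_{i,1}(\lambda)=i$ for some $i$. Notation: $(a;q)_\infty=\prod_{j\ge0}(1-aq^j)$, $(a;q)_n=\prod_{j=0}^{n-1}(1-aq^j)$. *)

(* Defs.v *)
From mathcomp Require Import all_boot all_order all_algebra.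
Set Implicit Arguments. Unset Strict Implicit. Unset Printing Implicit Defensive.
Import Order.TTheory GRing.Theory Num.Theory.
Local Open Scope ring_scope.

Definition is_partition (n : nat) (s : seq nat) : bool :=
  [&& sorted geq s, all (fun x => 0 < x)%N s & sumn s == n].

(* First-column hook length h_{i,1} = lambda_i + (t - i), 1 <= i <= t.
   With 0-based index k = i - 1 : h = nth 0 s k + (t - (k+1)). *)
Definition hook1 (s : seq nat) (k : nat) : nat := (nth 0 s k + (size s - k.+1))%N.

Definition has_fixed_hook (s : seq nat) : bool :=
  has (fun k => hook1 s k == k.+1) (iota 0 (size s)).

(* Partitions of n are encoded injectively as n-tuples of parts in [0, n],
   weakly decreasing, padded by zeros (a partition of n has at most n parts). *)
Definition positive_parts (n : nat) (t : n.-tuple 'I_n.+1) : seq nat :=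
  filter (fun x => 0 < x)%N [seq (val x : nat) | x <- t].

Definition f (n : nat) : nat :=
  #|[set t : n.-tuple 'I_n.+1 |
      [&& sorted geq [seq (val x : nat) | x <- t],
          is_partition n (positive_parts t)
        & has_fixed_hook (positive_parts t)]]|.

Definition fps := nat -> int.

Definition fps_of_poly (p : {poly int}) : fps := fun n => p`_n.

Definition fmul (a b : fps) : fps :=
  fun n => \sum_(i < n.+1) a i * b (n - i)%N.

(* Multiplicative inverse of a series with constant term 1:
   b_0 = 1, b_(m+1) = - sum_(k=1)^(m+1) a_k b_(m+1-k). *)
Fixpoint finv_seq (a : fps) (n : nat) : seq int :=
  match n with
  | 0 => [:: 1]
  | m.+1 => let s := finv_seq a m in
            rcons s (- \sum_(i < m.+1) a i.+1 * nth 0 s (m - i)%N)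
  end.
Definition finv (a : fps) : fps := fun n => nth 0 (finv_seq a n) n.

Definition qpoch_fin (T : nat) : {poly int} := \prod_(j < T) (1 - 'X^(j.+1)).

(* (q^m;q)_oo = prod_(j>=0) (1 - q^(m+j)) for m >= 1, as the q-adic limit of
   its partial products: the coefficient of q^n is already attained by the
   partial product over j < n+1 (all later factors are 1 + O(q^(n+1))). *)
Definition qpoch_inf (m : nat) : fps :=
  fun n => (\prod_(j < n.+1) (1 - 'X^(m + j)) : {poly int})`_n.

(* q-adically convergent sum sum_(T>=0) F T, for families where F T = O(q^(T+1))
   (so only T <= n contributes to the coefficient of q^n). *)
Definition fsum (F : nat -> fps) : fps := fun n => \sum_(T < n.+1) F T n.

Definition term1 (T : nat) : fps :=
  fmul (fps_of_poly 'X^((T.+1) ^ 2))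
       (finv (fmul (fps_of_poly (qpoch_fin T)) (qpoch_inf T.+2))).

Definition term2 (T : nat) : fps :=
  fmul (fps_of_poly ('X^((T.+1) ^ 2) * (1 - 'X^(T.+1)))) (finv (qpoch_inf 1)).

(* Main.v *)
Require Import Defs.
From mathcomp Require Import all_boot all_order all_algebra.
From mathcomp Require Import zify ring lra.
Unset Printing Implicit Defensive.
Import Order.TTheory GRing.Theory Num.Theory.
Local Open Scope ring_scope.
Local Notation finv := Defs.finv.
Definition eqm (N : nat) (p q : {poly int}) := forall i, (i < N)%N -> p`_i = q`_i.

Lemma eqm_refl N p : eqm N p p. Proof. by []. Qed.
Lemma eqm_sym N p q : eqm N p q -> eqm N q p. Proof. by move=> h i hi; rewrite h. Qed.
Lemma eqm_trans N p q r : eqm N p q -> eqm N q r -> eqm N p r.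
Proof. by move=> h1 h2 i hi; rewrite h1 // h2. Qed.
Lemma eqm_le N M p q : (M <= N)%N -> eqm N p q -> eqm M p q.
Proof. by move=> hMN h i hi; apply: h; apply: leq_trans hMN. Qed.
Lemma eqmD N p q p' q' : eqm N p p' -> eqm N q q' -> eqm N (p + q) (p' + q').
Proof. by move=> h1 h2 i hi; rewrite !coefD h1 // h2. Qed.
Lemma eqmB N p q p' q' : eqm N p p' -> eqm N q q' -> eqm N (p - q) (p' - q').
Proof. by move=> h1 h2 i hi; rewrite !coefB h1 // h2. Qed.
Lemma eqmM N p q p' q' : eqm N p p' -> eqm N q q' -> eqm N (p * q) (p' * q').
Proof.
move=> h1 h2 i hi; rewrite !coefM; apply: eq_bigr => j _.
have hj : (j < N)%N by apply: leq_ltn_trans hi; rewrite -ltnS.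
have hij : (i - j < N)%N by apply: leq_ltn_trans hi; apply: leq_subr.
by rewrite h1 // h2.
Qed.
Lemma eqm_sum N (I : Type) (r : seq I) (P : pred I) (F G : I -> {poly int}) :
  (forall x, P x -> eqm N (F x) (G x)) ->
  eqm N (\sum_(x <- r | P x) F x) (\sum_(x <- r | P x) G x).
Proof.
move=> h i hi; rewrite !coef_sum; apply: eq_bigr => x Px; exact: h.
Qed.
Lemma eqmXn N e p : (N <= e)%N -> eqm N ('X^e * p) 0.
Proof.
move=> he i hi; rewrite coefXnM coef0 ifT //; exact: leq_trans hi he.
Qed.
Lemma eqm_inv_uniq N u v w : eqm N (u * v) 1 -> eqm N (u * w) 1 -> eqm N v w.
Proof.
move=> h1 h2.
have e1 : eqm N v (v * (u * w)).
  by rewrite -[v in eqm _ v _]mulr1; apply: eqmM => //; apply: eqm_sym.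
have e2 : eqm N ((u * v) * w) w.
  by rewrite -[w in eqm _ _ w]mul1r; apply: eqmM.
apply: eqm_trans e1 _; rewrite mulrA [v * u]mulrC; exact: e2.
Qed.

Definition tr (a : fps) (N : nat) : {poly int} := \poly_(i < N) a i.
Lemma coef_tr a N i : (i < N)%N -> (tr a N)`_i = a i.
Proof. by move=> hi; rewrite coef_poly hi. Qed.

Lemma tr_fmul a b N : eqm N (tr (fmul a b) N) (tr a N * tr b N).
Proof.
move=> i hi; rewrite coef_tr // coefM; apply: eq_bigr => j _.
have hj : (j < N)%N by apply: leq_ltn_trans hi; rewrite -ltnS.
have hij : (i - j < N)%N by apply: leq_ltn_trans hi; apply: leq_subr.
by rewrite !coef_tr.
Qed.
Lemma tr_poly p N : eqm N (tr (fps_of_poly p) N) p.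
Proof. by move=> i hi; rewrite coef_tr. Qed.
Arguments eqm_sym {N p q}.
Arguments eqm_trans {N p q r}.
Arguments eqm_le {N M p q}.
Arguments eqmD {N p q p' q'}.
Arguments eqmB {N p q p' q'}.
Arguments eqmM {N p q p' q'}.
Arguments eqm_inv_uniq {N u v w}.
Lemma size_finv_seq a n : size (finv_seq a n) = n.+1.
Proof. by elim: n => [|n IH] //=; rewrite size_rcons IH. Qed.

Lemma finv_seq_nth a m j : (j <= m)%N -> nth 0 (finv_seq a m) j = finv a j.
Proof.
elim: m => [|m IH] hj; first by move: hj; rewrite leqn0 => /eqP->.
rewrite leq_eqVlt in hj; case/orP: hj => [/eqP->|hj] //.
by rewrite /= nth_rcons size_finv_seq hj IH.
Qed.

Lemma finv0 a : finv a 0 = 1. Proof. by []. Qed.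
Lemma finvS a m :
  finv a m.+1 = - \sum_(i < m.+1) a i.+1 * finv a (m - i)%N.
Proof.
rewrite /finv /= nth_rcons size_finv_seq ltnn eqxx; congr (- _).
apply: eq_bigr => i _; rewrite finv_seq_nth //; exact: leq_subr.
Qed.

Lemma finv_spec a N : a 0%N = 1 -> eqm N (tr a N * tr (finv a) N) 1.
Proof.
move=> a0 i hi; rewrite -(tr_fmul a (finv a) N i hi) coef_tr // coef1 /fmul; case: i hi => [|m] hi.
  by rewrite big_ord1 a0 finv0 mulr1.
rewrite big_ord_recl /= a0 mul1r subn0 finvS.
rewrite addrC; apply/eqP; rewrite subr_eq0; apply/eqP; apply: eq_bigr => i _.
by rewrite /bump /= subSS.
Qed.

Lemma finv_uniq a N c : a 0%N = 1 -> eqm N (tr a N * c) 1 -> eqm N c (tr (finv a) N).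
Proof. move=> a0 h; exact: (eqm_inv_uniq h (finv_spec a N a0)). Qed.

Definition Q (m M : nat) : {poly int} := \prod_(j < M) (1 - 'X^(m + j)).

Lemma eqm_1X N e : (N <= e)%N -> eqm N (1 - 'X^e) 1.
Proof.
move=> he i hi; rewrite coefB coefXn.
have -> : (i == e) = false by apply/eqP; lia.
by rewrite subr0.
Qed.

Lemma Q_stable m N M : (0 < m)%N -> (N <= M)%N -> eqm N (Q m M) (Q m N).
Proof.
move=> m0; elim: M => [|M IH] hM.
  by move: hM; rewrite leqn0 => /eqP->.
rewrite leq_eqVlt in hM; case/orP: hM => [/eqP->|hM] //.
apply: (eqm_trans _ (IH hM)); rewrite /Q big_ord_recr /= -[X in eqm _ _ X]mulr1.
apply: eqmM => //; apply: eqm_1X; lia.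
Qed.

Lemma tr_qpoch_inf m N : (0 < m)%N -> eqm N (tr (qpoch_inf m) N) (Q m N).
Proof.
move=> m0 i hi; rewrite coef_tr // /qpoch_inf -/(Q m i.+1).
by rewrite (Q_stable m i.+1 N m0 hi i (ltnSn i)).
Qed.

Lemma Q0 m N : (0 < m)%N -> eqm 1 (Q m N) 1.
Proof.
move=> m0; rewrite /Q; elim: N => [|N IH]; first by rewrite big_ord0.
rewrite big_ord_recr /= -[X in eqm _ _ X]mulr1; apply: eqmM => //.
apply: eqm_1X; lia.
Qed.

Lemma qpoch_fin_rec T : qpoch_fin T.+1 = qpoch_fin T * (1 - 'X^(T.+1)).
Proof. by rewrite /qpoch_fin big_ord_recr. Qed.

Lemma qpoch_fin_Q T : qpoch_fin T = Q 1 T.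
Proof. by rewrite /qpoch_fin /Q; apply: eq_bigr => i _; rewrite add1n. Qed.

Definition prod1 T : fps := fmul (fps_of_poly (qpoch_fin T)) (qpoch_inf T.+2).

Lemma prod1_0 T : prod1 T 0%N = 1.
Proof.
rewrite /prod1 /fmul big_ord1 /= /fps_of_poly qpoch_fin_Q.
rewrite (Q0 1 T) // /qpoch_inf -/(Q T.+2 1) (Q0 T.+2 1) //.
by rewrite coef1 mulr1.
Qed.

Lemma qinf1_0 : qpoch_inf 1 0%N = 1.
Proof. by have := Q0 1 1 (ltn0Sn 0) 0 (ltn0Sn 0); rewrite coef1. Qed.

Lemma tr_prod1 T N : eqm N (tr (prod1 T) N) (qpoch_fin T * Q T.+2 N).
Proof.
apply: eqm_trans (tr_fmul _ _ _) _; apply: eqmM; first exact: tr_poly.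
exact: tr_qpoch_inf.
Qed.

Lemma Q_split T M : Q 1 (T.+1 + M) = qpoch_fin T * (1 - 'X^(T.+1)) * Q T.+2 M.
Proof.
rewrite /Q big_split_ord /= -qpoch_fin_rec qpoch_fin_Q /Q; congr (_ * _).
Qed.

Lemma term1_term2 T n : term1 T n = term2 T n.
Proof.
set N := n.+1.
have key : eqm N (tr (finv (prod1 T)) N)
                 ((1 - 'X^(T.+1)) * tr (finv (qpoch_inf 1)) (T.+1 + N)).
  apply: eqm_sym; apply: finv_uniq; first exact: prod1_0.
  apply: eqm_trans (eqmM (tr_prod1 T N) (eqm_refl _ _)) _.
  have h1 := finv_spec _ (T.+1 + N) qinf1_0.
  have h2 := tr_qpoch_inf 1 (T.+1 + N) (ltn0Sn 0).
  have h3 : eqm N (Q 1 (T.+1 + N) * tr (finv (qpoch_inf 1)) (T.+1 + N)) 1.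
    apply: eqm_le (leq_addl _ _) _.
    apply: eqm_trans (eqmM (eqm_sym h2) (eqm_refl _ _)) h1.
  apply: eqm_trans _ h3; rewrite Q_split.
  have -> : qpoch_fin T * Q T.+2 N * ((1 - 'X^(T.+1)) * tr (finv (qpoch_inf 1)) (T.+1 + N))
     = qpoch_fin T * (1 - 'X^(T.+1)) * Q T.+2 N * tr (finv (qpoch_inf 1)) (T.+1 + N) by ring.
  exact: eqm_refl.
rewrite /term1 /term2 -/(prod1 T).
have hn : (n < N)%N by [].
rewrite -(coef_tr (fmul _ _) _ _ hn) (tr_fmul _ _ _ _ hn) -[RHS](coef_tr (fmul _ _) _ _ hn) (tr_fmul _ _ _ _ hn).
have E1 : eqm N (tr (fps_of_poly 'X^(T.+1 ^ 2)) N * tr (finv (prod1 T)) N)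
    ('X^(T.+1 ^ 2) * ((1 - 'X^(T.+1)) * tr (finv (qpoch_inf 1)) (T.+1 + N))).
  exact: eqmM (tr_poly _ _) key.
have E2 : eqm N (tr (fps_of_poly ('X^(T.+1 ^ 2) * (1 - 'X^(T.+1)))) N * tr (finv (qpoch_inf 1)) N)
    ('X^(T.+1 ^ 2) * ((1 - 'X^(T.+1)) * tr (finv (qpoch_inf 1)) (T.+1 + N))).
  rewrite mulrA; apply: eqmM; first exact: tr_poly.
  move=> i hi; rewrite !coef_tr //; exact: ltn_addl.
by rewrite (E1 _ hn) (E2 _ hn).
Qed.
Lemma term1_char T N C :
  eqm N (qpoch_fin T * Q T.+2 N * C) ('X^((T.+1)^2)) ->
  forall n, (n < N)%N -> term1 T n = C`_n.
Proof.
move=> h n hn.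
set B := tr (finv (prod1 T)) N.
have hB : eqm N (tr (prod1 T) N * B) 1 := finv_spec _ N (prod1_0 T).
have hA : eqm N (tr (prod1 T) N) (qpoch_fin T * Q T.+2 N) := tr_prod1 T N.
have e1 : eqm N C (C * (tr (prod1 T) N * B)).
  by rewrite -[C in eqm _ C _]mulr1; apply: eqmM => //; apply: eqm_sym.
have e2 : eqm N (C * (tr (prod1 T) N * B)) ('X^((T.+1)^2) * B).
  rewrite mulrA [C * _]mulrC; apply: eqmM => //.
  exact: eqm_trans (eqmM hA (eqm_refl _ _)) h.
rewrite /term1 -/(prod1 T) -(coef_tr (fmul _ _) _ _ hn) (tr_fmul _ _ _ _ hn).
by rewrite (eqm_trans e1 e2 _ hn); apply: (eqmM (tr_poly _ _) (eqm_refl _ _)).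
Qed.
Local Open Scope nat_scope.

Fixpoint dec (L : nat) : nat -> seq (seq nat) :=
  match L with
  | 0 => fun _ => [:: [::]]
  | L'.+1 => fix decA a := match a with
        | 0 => [:: nseq L'.+1 0]
        | a'.+1 => [seq rcons s 0 | s <- dec L' a'.+1] ++ [seq map S s | s <- decA a']
        end
  end.

Definition good L a (s : seq nat) :=
  [&& size s == L, pairwise geq s & all (fun x => x <= a) s].

Lemma dec0 a : dec 0 a = [:: [::]]. Proof. by []. Qed.
Lemma decS0 L : dec L.+1 0 = [:: nseq L.+1 0]. Proof. by []. Qed.
Lemma decSS L a : dec L.+1 a.+1 =
  [seq rcons s 0 | s <- dec L a.+1] ++ [seq map S s | s <- dec L.+1 a].
Proof. by []. Qed.

Lemma pw_nseq n x : pairwise geq (nseq n x).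
Proof. by elim: n => //= n ->; rewrite all_nseq /= leqnn orbT. Qed.

Lemma mem_dec L a s : (s \in dec L a) = good L a s.
Proof.
elim: L a s => [|L IHL] a s.
  by rewrite dec0 inE /good; case: s.
elim: a s => [|a IHa] s.
  rewrite decS0 inE /good; apply/eqP/idP => [->|/and3P[/eqP sz _ a0]].
    by rewrite size_nseq eqxx pw_nseq all_nseq.
  have /all_pred1P : all (pred1 0) s.
    by apply: sub_all a0 => x; rewrite leqn0.
  by rewrite sz.
rewrite decSS mem_cat; apply/orP/idP.
  case=> /mapP[x hx ->].
    move: hx; rewrite IHL /good => /and3P[/eqP sz pw al].
    rewrite size_rcons sz eqxx pairwise_rcons pw all_rcons al andbT /=.
    by rewrite andbT; apply/allP => y.
  move: hx; rewrite IHa /good => /and3P[/eqP sz pw al].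
  rewrite /good size_map sz eqxx pairwise_map all_map /=; apply/andP; split.
    exact: pw.
  by apply: sub_all al => y.
move=> /and3P[/eqP sz pw al].
case/lastP: s sz pw al => [|x y] //; rewrite size_rcons => -[sz] pw al.
have pw' := pw; have al' := al.
move: pw al; rewrite pairwise_rcons all_rcons => /andP[ally pwx] /andP[ya alx].
case: y ally ya pw' al' => [|y] ally ya pw' al'.
  by left; apply/mapP; exists x => //; rewrite IHL /good sz eqxx pwx alx.
right; apply/mapP; exists (map predn (rcons x y.+1)).
  rewrite IHa /good size_map size_rcons sz eqxx /= pairwise_map all_map.
  apply/andP; split.
    by apply: sub_pairwise pw' => u v /=; lia.
  by apply: sub_all al' => u /=; lia.
rewrite -map_comp map_id_in // => z; rewrite mem_rcons inE => /orP[/eqP-> //|hz] /=.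
have := allP ally z hz; rewrite /=; lia.
Qed.
Lemma uniq_dec L a : uniq (dec L a).
Proof.
elim: L a => [|L IHL] a //.
elim: a => [|a IHa] //.
rewrite decSS cat_uniq map_inj_uniq ?IHL //; last exact: rcons_injl.
rewrite map_inj_uniq ?IHa ?andbT; last exact: inj_map succn_inj.
apply/hasPn => y /mapP[x hx ->]; apply/mapP => -[z _ ez].
move: hx; rewrite mem_dec /good => /and3P[/eqP sz _ _].
case: x sz ez => [|x0 x] //= _ ez.
have := congr1 (last 0) ez; rewrite last_rcons /= last_map //.
Qed.

Definition D L a n := count (fun s => sumn s == n) (dec L a).

Lemma sumn_mapS s : sumn (map S s) = sumn s + size s.
Proof. by elim: s => //= x s ->; rewrite addnS addSn addnA. Qed.

Lemma D0 a n : D 0 a n = (n == 0).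
Proof. by rewrite /D dec0 /= addn0 eq_sym. Qed.

Lemma DS0 L n : D L.+1 0 n = (n == 0).
Proof. by rewrite /D decS0 /= sumn_nseq mul0n addn0 eq_sym. Qed.

Lemma DSS L a n : D L.+1 a.+1 n =
  D L a.+1 n + (if L.+1 <= n then D L.+1 a (n - L.+1) else 0).
Proof.
rewrite /D decSS count_cat !count_map; congr (_ + _).
  by elim: (dec L a.+1) => //= s l ->; rewrite sumn_rcons addn0.
have : all (fun s => size s == L.+1) (dec L.+1 a).
  by apply/allP => s; rewrite mem_dec /good => /and3P[].
elim: (dec L.+1 a) => [|s l IH] /=; first by case: ifP.
move=> /andP[/eqP sz /IH ->] /=; rewrite sumn_mapS sz.
case: (leqP L.+1 n) => hn /=; last by have -> : (sumn s + L.+1 == n) = false by apply/eqP; lia.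
congr (nat_of_bool _ + _); apply/eqP/eqP; lia.
Qed.

Lemma le_sumn x s : x \in s -> x <= sumn s.
Proof.
elim: s => //= y s IH; rewrite inE => /orP[/eqP->|/IH h]; first exact: leq_addr.
exact: leq_trans h (leq_addl _ _).
Qed.

Lemma Dbound L a b s : s <= a -> s <= b -> D L a s = D L b s.
Proof.
move=> ha hb; rewrite /D -!size_filter.
apply: perm_size; apply: uniq_perm; rewrite ?filter_uniq ?uniq_dec //.
move=> x; rewrite !mem_filter !mem_dec /good.
case: eqP => //= hx; case: (size x == L) => //=; case: (pairwise geq x) => //=.
apply/allP/allP => h y hy /=.
  by have := le_sumn _ _ hy; rewrite hx; lia.
by have := le_sumn _ _ hy; rewrite hx; lia.
Qed.

Lemma DL0 L s : D L 0 s = (s == 0).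
Proof. by case: L => [|L]; rewrite ?D0 ?DS0. Qed.

Lemma D_0 L a : D L a 0 = 1.
Proof. by rewrite (Dbound L a 0 0) // DL0. Qed.
Local Open Scope ring_scope.

Fixpoint Gp (k : nat) : nat -> {poly int} :=
  match k with
  | 0 => fun _ => 1
  | k'.+1 => fix GA a := match a with
        | 0 => 1
        | a'.+1 => Gp k' a'.+1 + 'X^(k'.+1) * GA a'
        end
  end.

Lemma coef1_nat (s : nat) : (1 : {poly int})`_s = ((s == 0)%N : nat)%:Z.
Proof. by rewrite coef1; case: (s == 0)%N. Qed.

Lemma Gp_coef k a s : (Gp k a)`_s = (D k a s)%:Z.
Proof.
elim: k a s => [|k IHk] a s; first by rewrite D0 coef1_nat.
elim: a s => [|a IHa] s; first by rewrite DS0 coef1_nat.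
rewrite /= -/(Gp k.+1 a) coefD IHk coefXnM DSS PoszD; congr (_ + _).
by case: ltnP => h; rewrite ?IHa.
Qed.

Definition Ptr N L : {poly int} := tr (fun s => (D L s s)%:Z) N.

Lemma Ptr_rec N L : eqm N ((1 - 'X^(L.+1)) * Ptr N L.+1) (Ptr N L).
Proof.
move=> i hi; rewrite mulrBl mul1r coefB coefXnM !coef_tr //.
case: i hi => [|i] hi; first by rewrite !D_0.
rewrite DSS PoszD; case: (ltnP L i.+1) => h.
  rewrite ifF; last by apply/negbTE; rewrite -leqNgt.
  rewrite (Dbound L.+1 i (i.+1 - L.+1) (i.+1 - L.+1)) //; last lia.
  by rewrite addrK.
  by rewrite ifT ?ltnS // addr0 subr0.
lia.
Qed.

Lemma Ptr0 N : eqm N (Ptr N 0) 1.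
Proof. by move=> i hi; rewrite coef_tr // D0 coef1_nat. Qed.

Lemma qPtr N L : eqm N (qpoch_fin L * Ptr N L) 1.
Proof.
elim: L => [|L IH]; first by rewrite /qpoch_fin big_ord0 mul1r; exact: Ptr0.
rewrite qpoch_fin_rec -mulrA; apply: eqm_trans IH.
exact: eqmM (eqm_refl _ _) (Ptr_rec N L).
Qed.

Lemma gauss k a : qpoch_fin a * qpoch_fin k * Gp k a = qpoch_fin (a + k).
Proof.
elim: k a => [|k IHk] a.
  by rewrite /= addn0 /qpoch_fin big_ord0 !mulr1.
elim: a => [|a IHa].
  by rewrite /= add0n /qpoch_fin big_ord0 !mul1r mulr1.
rewrite /= -/(Gp k.+1 a).
have h1 := IHk a.+1; have h2 := IHa.
have -> : qpoch_fin a.+1 * qpoch_fin k.+1 * (Gp k a.+1 + 'X^(k.+1) * Gp k.+1 a) =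
   (1 - 'X^(k.+1)) * (qpoch_fin a.+1 * qpoch_fin k * Gp k a.+1) +
   'X^(k.+1) * (1 - 'X^(a.+1)) * (qpoch_fin a * qpoch_fin k.+1 * Gp k.+1 a).
  rewrite (qpoch_fin_rec k) (qpoch_fin_rec a); ring.
rewrite h1 h2 !addSn !addnS (qpoch_fin_rec (a + k).+1).
have hX : 'X^(k.+1) * 'X^(a.+1) = 'X^((a + k).+2) :> {poly int}.
  by rewrite -exprD; congr (_ ^+ _); lia.
rewrite -hX; ring.
Qed.

Lemma mixP N a k : eqm N (qpoch_fin a * Gp k a * Ptr N (a + k)) (Ptr N k).
Proof.
apply: (eqm_inv_uniq (u := qpoch_fin k)); last exact: qPtr.
have -> : qpoch_fin k * (qpoch_fin a * Gp k a * Ptr N (a + k)) =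
          (qpoch_fin a * qpoch_fin k * Gp k a) * Ptr N (a + k) by ring.
by rewrite gauss; exact: qPtr.
Qed.

Definition E N m : {poly int} := \sum_(k < N) 'X^(k * m.+1) * Ptr N k.

Lemma E_diff N m : eqm N (E N m - E N m.+1) ('X^(m.+1) * E N m).
Proof.
case: N => [|N]; first by [].
rewrite /E -sumrB.
have -> : \sum_(i < N.+1) ('X^(i * m.+1) * Ptr N.+1 i - 'X^(i * m.+2) * Ptr N.+1 i) =
    \sum_(i < N.+1) 'X^(i * m.+1) * ((1 - 'X^i) * Ptr N.+1 i).
  apply: eq_bigr => i _; rewrite (mulnS i m.+1) exprD; ring.
rewrite big_ord_recl /= expr0 subrr mul0r mulr0 add0r.
rewrite [X in _ * X]big_ord_recr /= mulrDr mulr_sumr.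
rewrite -[X in eqm _ X _]addr0; apply: eqmD.
  apply: eqm_sum => i _ /=; rewrite mulrA -exprD.
  have -> : (bump 0 i * m.+1 = m.+1 + i * m.+1)%N by rewrite /bump /=; lia.
  exact: eqmM (eqm_refl _ _) (Ptr_rec _ _).
apply: eqm_sym; rewrite mulrA -exprD; apply: eqmXn; lia.
Qed.

Lemma E_step N m : eqm N ((1 - 'X^(m.+1)) * E N m) (E N m.+1).
Proof.
have h := E_diff N m.
rewrite mulrBl mul1r.
have -> : E N m.+1 = E N m - (E N m - E N m.+1) by ring.
by apply: eqmB => //; apply: eqm_sym.
Qed.

Lemma E_Q N m M : eqm N (Q m.+1 M * E N m) (E N (m + M)).
Proof.
elim: M m => [|M IH] m; first by rewrite /Q big_ord0 mul1r addn0.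
rewrite /Q big_ord_recl /= addn0 -mulrA.
have -> : \prod_(i < M) (1 - 'X^(m.+1 + bump 0 i)) = Q m.+2 M :> {poly int}.
  apply: eq_bigr => i _; congr (_ - GRing.exp _ _); rewrite /bump; lia.
rewrite mulrCA addnS -addSn.
apply: eqm_trans (IH m.+1); exact: eqmM (eqm_refl _ _) (E_step N m).
Qed.

Lemma E_big N m : (N <= m)%N -> eqm N (E N m) 1.
Proof.
case: N => [|N] hN; first by [].
rewrite /E big_ord_recl /= mul1r -[X in eqm _ _ X]addr0; apply: eqmD.
  exact: Ptr0.
have h : eqm N.+1 (\sum_(i < N) 'X^(bump 0 i * m.+1) * Ptr N.+1 (bump 0 i))
   (\sum_(i < N) (0 : {poly int})).
  apply: eqm_sum => i _; apply: eqmXn; rewrite /bump; nia.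
by rewrite big1_eq in h.
Qed.

Lemma QE N m : eqm N (Q m.+1 N * E N m) 1.
Proof. apply: eqm_trans (E_Q N m N) _; apply: E_big; exact: leq_addl. Qed.
Definition base T k := (T.+1 * (T.+1 + k) + k)%N.

Definition cnt T k n : nat :=
  (\sum_(u <- dec (T + k) n) \sum_(v <- dec k T)
      ((sumn u + sumn v + base T k)%N == n : nat))%N.

Lemma Posz_sum (I : Type) (r : seq I) (P : pred I) (F : I -> nat) :
  Posz (\sum_(i <- r | P i) F i)%N = \sum_(i <- r | P i) Posz (F i).
Proof. exact: (big_morph Posz PoszD (erefl _)). Qed.

Lemma sum_count (A : seq (seq nat)) r :
  (\sum_(u <- A) (sumn u == r : nat))%N = count (fun u => sumn u == r) A.
Proof. by elim: A => [|u A IH]; rewrite ?big_nil ?big_cons ?IH. Qed.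

Lemma cnt_conv T k n : (base T k <= n)%N ->
  cnt T k n = (\sum_(j < (n - base T k).+1)
                 D (T + k) j j * D k T (n - base T k - j))%N.
Proof.
move=> hb; rewrite /cnt; set r := (n - base T k)%N.
have e1 : forall u, (\sum_(v <- dec k T) ((sumn u + sumn v + base T k)%N == n : nat) =
    \sum_(j < r.+1) (sumn u == j : nat) * D k T (r - j))%N.
  move=> u; case: (leqP (sumn u) r) => hu.
    have -> : (\sum_(j < r.+1) (sumn u == j : nat) * D k T (r - j) = D k T (r - sumn u))%N.
      rewrite (bigD1 (@Ordinal r.+1 (sumn u) hu)) //= eqxx mul1n big1 ?addn0 //.
      move=> j hj; have -> : (sumn u == j) = false.
        by apply/negbTE; apply: contra hj => /eqP e; apply/eqP/val_inj; rewrite /= e.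
      by [].
    rewrite /D -sum_count; apply: eq_bigr => v _; congr nat_of_bool; apply/eqP/eqP; lia.
  rewrite [LHS]big1; last by move=> v _; apply/eqP; rewrite eqb0; apply/eqP; lia.
  rewrite [RHS]big1 // => j _; have -> : (sumn u == j) = false by apply/eqP; move: (ltn_ord j); lia.
  by [].
rewrite (eq_bigr _ (fun u _ => e1 u)) exchange_big /=; apply: eq_bigr => j _.
rewrite -big_distrl /= sum_count; congr (_ * _).
rewrite -[X in _ = X]/(D (T + k) j j) (Dbound (T + k) j n j) //.
have := ltn_ord j; rewrite /r; lia.
Qed.
Lemma cnt_coef T k N n : (n < N)%N ->
  (cnt T k n)%:Z = ('X^(base T k) * (Ptr N (T + k) * Gp k T))`_n.
Proof.
move=> hn; rewrite coefXnM; case: ltnP => hb.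
  rewrite /cnt big1 // => u _; rewrite big1 // => v _.
  have -> : (sumn u + sumn v + base T k == n) = false by apply/eqP; lia.
  by [].
rewrite cnt_conv // Posz_sum coefM; apply: eq_big => // j _.
rewrite PoszM coef_tr ?Gp_coef //.
have := ltn_ord j; lia.
Qed.

Definition cT T n := (\sum_(k < n.+1) cnt T k n)%N.

Definition Sk N T : {poly int} := \sum_(k < N) 'X^(base T k) * (Ptr N (T + k) * Gp k T).

Lemma cT_tr T N : eqm N (tr (fun n => (cT T n)%:Z) N) (Sk N T).
Proof.
move=> n hn; rewrite coef_tr // /cT Posz_sum /Sk coef_sum.
under eq_bigr => k _ do rewrite (cnt_coef T k N n hn).
rewrite (big_ord_widen (n1 := n.+1) N (fun k => ('X^(base T k) * (Ptr N (T + k) * Gp k T))`_n)) //.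
rewrite big_mkcond /=; apply: eq_big => // k _; case: ifP => // hk.
by rewrite coefXnM ifT //; rewrite /base; move/negbT: hk; lia.
Qed.

Lemma main_gf T N :
  eqm N (qpoch_fin T * Q T.+2 N * tr (fun n => (cT T n)%:Z) N) ('X^((T.+1)^2)).
Proof.
have h1 : eqm N (qpoch_fin T * Sk N T) ('X^((T.+1)^2) * E N T.+1).
  rewrite /Sk /E mulr_sumr mulr_sumr; apply: eqm_sum => k _.
  have -> : qpoch_fin T * ('X^(base T k) * (Ptr N (T + k) * Gp k T)) =
     'X^(base T k) * (qpoch_fin T * Gp k T * Ptr N (T + k)) by ring.
  have -> : base T k = ((T.+1)^2 + k * T.+2)%N by rewrite /base; lia.
  rewrite exprD -mulrA; apply: eqmM => //; exact: eqmM (eqm_refl _ _) (mixP N T k).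
have h2 : eqm N (qpoch_fin T * tr (fun n => (cT T n)%:Z) N) ('X^((T.+1)^2) * E N T.+1).
  exact: eqm_trans (eqmM (eqm_refl _ _) (cT_tr T N)) h1.
have -> : qpoch_fin T * Q T.+2 N * tr (fun n => (cT T n)%:Z) N =
    Q T.+2 N * (qpoch_fin T * tr (fun n => (cT T n)%:Z) N) by ring.
apply: eqm_trans (eqmM (eqm_refl _ _) h2) _.
have -> : Q T.+2 N * ('X^((T.+1)^2) * E N T.+1) = 'X^((T.+1)^2) * (Q T.+2 N * E N T.+1) by ring.
rewrite -[X in eqm _ _ X]mulr1; apply: eqmM => //; exact: QE.
Qed.

Lemma term1_cT T n : term1 T n = (cT T n)%:Z.
Proof. by rewrite (term1_char T n.+1 _ (main_gf T n.+1) n) // coef_tr. Qed.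
Local Open Scope nat_scope.

Definition hk T k (s : seq nat) := (size s == T.+1 + k + k) && (nth 0 s (T + k) == T.+1).

Lemma pw_nth (s : seq nat) i j : pairwise geq s -> i <= j -> j < size s -> nth 0 s j <= nth 0 s i.
Proof.
move=> /(pairwiseP 0) h; rewrite leq_eqVlt => /orP[/eqP->//|ij] js.
exact: h (ltn_trans ij js) js ij.
Qed.

Lemma size_le_sumn s : all (fun x => 0 < x) s -> size s <= sumn s.
Proof. elim: s => //= x s IH /andP[x0 /IH h]; lia. Qed.

Lemma fixed_hk s : all (fun x => 0 < x) s ->
  has_fixed_hook s = [exists T : 'I_(sumn s).+1, exists k : 'I_(sumn s).+1, hk T k s].
Proof.
move=> pos; apply/hasP/existsP.
  move=> [j]; rewrite mem_iota add0n => /andP[_ js]; rewrite /hook1 => /eqP h.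
  have mpos : 0 < nth 0 s j by exact: (allP pos) _ (mem_nth 0 js).
  have mle : nth 0 s j <= sumn s by exact: le_sumn (mem_nth 0 js).
  have sz := size_le_sumn s pos.
  have hT : (nth 0 s j).-1 < (sumn s).+1 by lia.
  have hk' : size s - j.+1 < (sumn s).+1 by lia.
  exists (Ordinal hT); apply/existsP; exists (Ordinal hk'); rewrite /hk /=.
  have -> : (nth 0 s j).-1 + (size s - j.+1) = j by lia.
  apply/andP; split; apply/eqP; lia.
move=> [T /existsP[k /andP[/eqP sz /eqP hn]]].
apply: (@ex_intro2 _ _ _ (T + k)); first by rewrite mem_iota add0n; lia.
rewrite /hook1 hn; apply/eqP; lia.
Qed.

Lemma hk_uniq s T k T' k' : pairwise geq s -> hk T k s -> hk T' k' s -> T = T' /\ k = k'.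
Proof.
move=> pw /andP[/eqP sz /eqP hn] /andP[/eqP sz' /eqP hn'].
have key : forall T k T' k', T + k < T' + k' -> size s = T.+1 + k + k ->
   size s = T'.+1 + k' + k' -> nth 0 s (T + k) = T.+1 -> nth 0 s (T' + k') = T'.+1 -> False.
  move=> a b a' b' lt e1 e2 h1 h2.
  have := pw_nth s (a + b) (a' + b') pw (ltnW lt) ltac:(lia); rewrite h1 h2; lia.
case: (ltngtP (T + k) (T' + k')) => c.
- by case: (key _ _ _ _ c sz sz' hn hn').
- by case: (key _ _ _ _ c sz' sz hn' hn).
have eT : T = T' by move: hn hn'; rewrite c => -> [].
split => //; lia.
Qed.
Definition vals n (t : n.-tuple 'I_n.+1) : seq nat := [seq (val x : nat) | x <- t].
Arguments vals {n}.

Lemma sorted_split (s : seq nat) : pairwise geq s ->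
  s = filter (fun x => 0 < x) s ++ nseq (count (fun x => x == 0) s) 0.
Proof.
elim: s => //= x s IH /andP[hx pw]; case: x hx => [|x] hx /=.
  have z : all (pred1 0) s by apply: sub_all hx => y /=; rewrite leqn0.
  move/all_pred1P: (z) => es.
  have -> : filter (fun x => 0 < x) s = [::].
    by rewrite es; elim: (size s) => //= n ->.
  have -> : count (fun x => x == 0) s = size s.
    by rewrite es count_nseq /= size_nseq mul1n.
  by rewrite /= es size_nseq.
by rewrite add0n -IH.
Qed.

Lemma vals_inj n (t1 t2 : n.-tuple 'I_n.+1) :
  pairwise geq (vals t1) -> pairwise geq (vals t2) ->
  positive_parts t1 = positive_parts t2 -> t1 = t2.
Proof.
move=> p1 p2 e.
have ev : vals t1 = vals t2.
  rewrite (sorted_split _ p1) (sorted_split _ p2); rewrite /positive_parts in e.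
  rewrite -/(vals t1) -/(vals t2) in e; rewrite e; congr (_ ++ nseq _ 0).
  have s1 : size (vals t1) = size (vals t2) by rewrite !size_map !size_tuple.
  rewrite (sorted_split _ p1) (sorted_split _ p2) !size_cat !size_nseq e in s1.
  lia.
apply: val_inj; apply: (inj_map val_inj); exact: ev.
Qed.

Lemma tuple_exists n (s : seq nat) : is_partition n s ->
  exists t : n.-tuple 'I_n.+1, pairwise geq (vals t) /\ positive_parts t = s.
Proof.
move=> /and3P[so pos /eqP sm].
have pw : pairwise geq s by rewrite -sorted_pairwise // => a b c h1 h2; exact: leq_trans h2 h1.
have szn : size s <= n by rewrite -sm; exact: size_le_sumn.
exists [tuple inord (nth 0 s i) | i < n].
have ev : vals [tuple inord (nth 0 s i) | i < n] = s ++ nseq (n - size s) 0.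
  apply: (@eq_from_nth _ 0).
    by rewrite size_map size_tuple size_cat size_nseq; lia.
  move=> i; rewrite size_map size_tuple => hi.
  rewrite (nth_map (inord 0)) ?size_tuple // -(tnth_nth (inord 0) _ (Ordinal hi)) tnth_mktuple /= inordK; last first.
    case: (ltnP i (size s)) => h; last by rewrite nth_default.
    by rewrite ltnS -sm; apply: le_sumn; exact: mem_nth.
  rewrite nth_cat; case: ltnP => h //; rewrite nth_nseq nth_default //.
  by case: ifP.
rewrite /positive_parts -/(vals _) ev; split.
  rewrite pairwise_cat pw pw_nseq andbT andbT; apply/allrelP => x y _.
  by rewrite mem_nseq => /andP[_ /eqP->].
rewrite filter_cat; have -> : filter (fun x => 0 < x) (nseq (n - size s) 0) = [::].
  by elim: (n - size s) => //= k ->.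
by rewrite cats0; apply/all_filterP.
Qed.
Definition build T (u v : seq nat) := map (addn T.+1) u ++ T.+1 :: map S v.

Lemma sumn_mapadd m s : sumn (map (addn m) s) = m * size s + sumn s.
Proof. elim: s => [|x s IH] /=; first by rewrite muln0. rewrite IH mulnS; lia. Qed.

Lemma sorted_geq s : sorted geq s = pairwise geq s.
Proof. by apply: sorted_pairwise => a b c h1 h2; exact: leq_trans h2 h1. Qed.

Lemma build_ok T k n u v : u \in dec (T + k) n -> v \in dec k T ->
  sumn u + sumn v + base T k = n ->
  is_partition n (build T u v) && hk T k (build T u v).
Proof.
rewrite !mem_dec /good => /and3P[/eqP su pu au] /and3P[/eqP sv pv av] hs.
apply/andP; split; last first.
  rewrite /hk /build size_cat /= !size_map su sv nth_cat size_map su ltnn subnn /=.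
  by rewrite !eqxx; apply/eqP; lia.
apply/and3P; split.
- rewrite sorted_geq /build pairwise_cat; apply/and3P; split.
  + apply/allrelP => x y /mapP[a _ ->]; rewrite inE => /orP[/eqP->|/mapP[b hb ->]] /=.
      exact: leq_addr.
    have := allP av b hb; lia.
  + by rewrite pairwise_map; apply: sub_pairwise pu => a b /=; lia.
  + rewrite /= pairwise_map all_map; apply/andP; split; last exact: pv.
    apply/allP => b hb /=; have := allP av b hb; lia.
- rewrite /build all_cat all_map /=; apply/andP; split.
    by apply/allP => a _ /=; lia.
  by rewrite all_map; apply/allP => a _.
- rewrite /build sumn_cat /= sumn_mapS sumn_mapadd su sv -hs /base; apply/eqP; nia.
Qed.

Lemma build_all T k n s : is_partition n s -> hk T k s ->
  exists u v, [/\ u \in dec (T + k) n, v \in dec k T,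
     sumn u + sumn v + base T k = n & s = build T u v].
Proof.
move=> /and3P[so pos /eqP sm] /andP[/eqP sz /eqP hn].
rewrite sorted_geq in so.
have hi : T + k < size s by lia.
have es : s = take (T + k) s ++ T.+1 :: drop (T + k).+1 s.
  by rewrite -hn -drop_nth // cat_take_drop.
move: (so); rewrite {1}es pairwise_cat /= => /and3P[ar pt /andP[ad pd]].
have geT : forall x, x \in take (T + k) s -> T.+1 <= x.
  move=> x hx; have := allrelP ar x T.+1 hx; rewrite inE eqxx => /(_ isT) //.
have leT : forall x, x \in drop (T + k).+1 s -> x <= T.+1.
  by move=> x hx; have := allP ad x hx.
have posd : forall x, x \in drop (T + k).+1 s -> 0 < x.
  by move=> x hx; apply: (allP pos); rewrite es mem_cat inE hx !orbT.
have len : forall x, x \in s -> x <= n by move=> x hx; rewrite -sm; exact: le_sumn.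
exists (map (subn^~ T.+1) (take (T + k) s)), (map predn (drop (T + k).+1 s)).
split.
- rewrite mem_dec /good size_map size_takel ?eqxx; last exact: ltnW.
  rewrite pairwise_map all_map /=; apply/andP; split.
    by apply: sub_pairwise pt => a b /=; lia.
  apply/allP => x hx /=; have := len x; rewrite es mem_cat hx => /(_ isT); lia.
- rewrite mem_dec /good size_map size_drop sz.
  have -> : T.+1 + k + k - (T + k).+1 = k by lia.
  rewrite eqxx pairwise_map all_map /=; apply/andP; split.
    by apply: sub_pairwise pd => a b /=; lia.
  by apply/allP => x hx /=; have := leT x hx; lia.
- move: sm; rewrite {1}es sumn_cat /= => <-.
  have -> : sumn (take (T + k) s) = sumn (map (addn T.+1) (map (subn^~ T.+1) (take (T + k) s))).
    rewrite -map_comp map_id_in // => x hx /=; have := geT x hx; lia.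
  have -> : sumn (drop (T + k).+1 s) = sumn (map S (map predn (drop (T + k).+1 s))).
    rewrite -map_comp map_id_in // => x hx /=; have := posd x hx; lia.
  rewrite sumn_mapadd sumn_mapS !size_map size_takel; last exact: ltnW.
  rewrite size_drop sz /base; nia.
- rewrite {1}es /build; congr (_ ++ _ :: _).
    rewrite -map_comp map_id_in // => x hx /=; have := geT x hx; lia.
  rewrite -map_comp map_id_in // => x hx /=; have := posd x hx; lia.
Qed.
Lemma count_allpairs (A B : seq (seq nat)) (P : pred (seq nat * seq nat)) :
  count P [seq (x, y) | x <- A, y <- B] = \sum_(x <- A) \sum_(y <- B) P (x, y).
Proof.
elim: A => [|x A IH]; first by rewrite big_nil.
rewrite /= count_cat IH big_cons count_map; congr (_ + _).
by elim: B {IH} => [|y B IHB]; rewrite ?big_nil // big_cons /= IHB.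
Qed.

Lemma card_list (X : finType) (Y Z : eqType) (S : {set X}) (phi : X -> Y)
    (M : seq Z) (g : Z -> Y) :
  {in S &, injective phi} -> uniq M -> {in M &, injective g} ->
  (forall y, (exists2 x, x \in S & phi x = y) <-> (exists2 z, z \in M & g z = y)) ->
  #|S| = size M.
Proof.
move=> iphi uM ig hy; rewrite cardE -(size_map phi) -(size_map g M).
apply: perm_size; apply: uniq_perm.
- rewrite map_inj_in_uniq ?enum_uniq // => x1 x2; rewrite !mem_enum; exact: iphi.
- by rewrite map_inj_in_uniq.
move=> y; apply/mapP/mapP => -[x hx ->].
  have [z hz ez] : exists2 z, z \in M & g z = phi x by apply/hy; exists x; rewrite ?mem_enum in hx *.
  by exists z.
have [x' hx' ex] : exists2 x', x' \in S & phi x' = g x by apply/hy; exists x.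
by exists x'; rewrite ?mem_enum.
Qed.

Section Count.
Variable n : nat.

Definition Bset T k := [set t : n.-tuple 'I_n.+1 |
  [&& sorted geq (vals t), is_partition n (positive_parts t) & hk T k (positive_parts t)]].

Definition pairs T k := [seq p <- [seq (u, v) | u <- dec (T + k) n, v <- dec k T] |
   sumn p.1 + sumn p.2 + base T k == n].

Lemma size_pairs T k : size (pairs T k) = cnt T k n.
Proof.
rewrite size_filter count_allpairs /cnt; apply: eq_bigr => u _; apply: eq_bigr => v _.
by [].
Qed.

Lemma card_Bset T k : #|Bset T k| = cnt T k n.
Proof.
rewrite -size_pairs; apply: (card_list _ _ _ (Bset T k) (@positive_parts n) (pairs T k) (fun p => build T p.1 p.2)).
- move=> t1 t2; rewrite !inE => /and3P[s1 _ _] /and3P[s2 _ _].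
  by apply: vals_inj; rewrite -sorted_geq.
- rewrite filter_uniq // allpairs_uniq ?uniq_dec //.
  by move=> [a b] [c d] _ _ /= [-> ->].
- move=> [u v] [u' v']; rewrite !mem_filter => /andP[_ /allpairsP[[a b] [ha hb /= [e1 e2]]]].
  move=> /andP[_ /allpairsP[[c d] [hc hd /= [e3 e4]]]] /=.
  subst; move: ha hc; rewrite !mem_dec /good => /and3P[/eqP sa _ _] /and3P[/eqP sc _ _].
  rewrite /build => /eqP; rewrite eqseq_cat ?size_map ?sa ?sc // => /andP[/eqP e1 /eqP [e2]].
  by rewrite (inj_map (@addnI T.+1) e1) (inj_map succn_inj e2).
move=> y; split.
  move=> [t]; rewrite inE => /and3P[_ hp hh] <-.
  have [u [v [hu hv hs ey]]] := build_all T k n _ hp hh.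
  exists (u, v); last by rewrite ey.
  by rewrite mem_filter /= hs eqxx /=; apply/allpairsP; exists (u, v).
move=> [[u v]]; rewrite mem_filter => /andP[/eqP hs /allpairsP[[a b] [ha hb /= [e1 e2]]]] /= ey.
subst a b.
have /andP[hp hh] := build_ok T k n u v ha hb hs.
have [t [pt et]] := tuple_exists n _ hp.
exists t; last by rewrite et.
by rewrite /Bset inE et hp hh sorted_geq pt.
Qed.

Lemma hk_fixed s T k : hk T k s -> has_fixed_hook s.
Proof.
move=> /andP[/eqP sz /eqP hn]; apply/hasP; exists (T + k).
  by rewrite mem_iota add0n; lia.
by rewrite /hook1 hn; apply/eqP; lia.
Qed.

Definition Aset := [set t : n.-tuple 'I_n.+1 |
      [&& sorted geq [seq (val x : nat) | x <- t],
          is_partition n (positive_parts t)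
        & has_fixed_hook (positive_parts t)]].

Lemma sum_one N (P : nat -> nat -> bool) T0 k0 : T0 < N -> k0 < N -> P T0 k0 ->
  (forall T k, P T k -> T = T0 /\ k = k0) ->
  \sum_(T < N) \sum_(k < N) (P T k : nat) = 1.
Proof.
move=> hT hk p0 u.
have z : forall T : 'I_N, T != Ordinal hT -> \sum_(k < N) (P T k : nat) = 0.
  move=> T hT'; apply: big1 => k _; case: (boolP (P T k)) => // /u [e _].
  by case/eqP: hT'; apply: val_inj.
rewrite (bigD1 (Ordinal hT)) //= (eq_bigr (fun _ => 0) (fun T hT0 => z T hT0)) big1_eq addn0.
rewrite (bigD1 (Ordinal hk)) //= p0 big1 // => k hk'.
case: (boolP (P T0 k)) => // /u [_ e]; by case/eqP: hk'; apply: val_inj.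
Qed.

Lemma card_Aset : #|Aset| = \sum_(T < n.+1) \sum_(k < n.+1) #|Bset T k|.
Proof.
rewrite -sum1_card big_mkcond /=.
have -> : \sum_(T < n.+1) \sum_(k < n.+1) #|Bset T k| =
    \sum_(T < n.+1) \sum_(k < n.+1) \sum_t (t \in Bset T k : nat).
  apply: eq_bigr => T _; apply: eq_bigr => k _; rewrite -sum1_card big_mkcond /=.
  by apply: eq_bigr => t _; case: (t \in Bset T k).
rewrite [RHS](eq_bigr (fun T : 'I_n.+1 => \sum_t \sum_(k < n.+1) (t \in Bset T k : nat)));
  last by move=> T _; rewrite exchange_big.
rewrite [RHS]exchange_big /=; apply: eq_bigr => t _.
case: (boolP (t \in Aset)) => hA.
  move: (hA); rewrite inE => /and3P[so hp hf].
  have pos : all (fun x => 0 < x) (positive_parts t) by case/and3P: hp.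
  have sm : sumn (positive_parts t) = n by case/and3P: hp => _ _ /eqP.
  have pw : pairwise geq (positive_parts t) by case/and3P: hp; rewrite sorted_geq.
  move: hf; rewrite fixed_hk // => /existsP[T0 /existsP[k0 h0]].
  have hT : T0 < n.+1 by have := ltn_ord T0; lia.
  have hk0 : k0 < n.+1 by have := ltn_ord k0; lia.
  rewrite (sum_one n.+1 (fun T k => t \in Bset T k) T0 k0) //.
    by rewrite inE so hp h0.
  move=> T k; rewrite inE => /and3P[_ _ h].
  have [e1 e2] := hk_uniq _ _ _ _ _ pw h h0; by [].
rewrite big1 // => T _; rewrite big1 // => k _.
case: (boolP (t \in Bset T k)) => // hB; case/negP: hA.
move: hB; rewrite !inE => /and3P[-> -> h] /=; exact: hk_fixed h.
Qed.

End Count.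
Local Open Scope ring_scope.

Theorem mainTheorem2 :
  forall n : nat, (f n)%:Z = fsum term1 n /\ fsum term1 n = fsum term2 n.
Proof.
move=> n; split; last by rewrite /fsum; apply: eq_bigr => T _; rewrite term1_term2.
have -> : f n = #|Aset n| by [].
rewrite card_Aset /fsum Posz_sum; apply: eq_bigr => T _.
rewrite term1_cT /cT; congr Posz; apply: eq_bigr => k _; exact: card_Bset.
Qed.
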